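(* Let $\phi$ be a characteristic function and let $u\in\mathbb{R}\setminus\{0\}$ be such that $0<|\phi(u)|<1$. Let $\tilde\phi(u)\in\mathbb{C}$ be an arbitrary (possibly random) estimate of $\phi(u)$. Define $$\mathcal{Y}(u)=\log\bigl(-\log(|\phi(u)|^2)\bigr),\qquad \tilde{\mathcal{Y}}(u)=\log\bigl(-\log(T_{\omega_-,\omega_+}[|\tilde\phi|^2](u))\bigr),$$ $$\omega_\pm^*(u)=|\phi(u)|^2\Bigl(1\pm\frac{2|\log|\phi(u)||}{1+2|\log|\phi(u)||}\Bigr).$$ Then for any truncation levels $\omega_-(u),\omega_+(u)$ satisfying $$0<\omega_-(u)\le\omega_-^*(u)\le\omega_+^*(u)\le\omega_+(u)<1,$$ the following inequality holds with probability one: $$\bigl|\tilde{\mathcal{Y}}(u)-\mathcal{Y}(u)-\zeta_1(u)\bigl(|\tilde\phi(u)|^2-|\phi(u)|^2\bigr)\bigr|\le\zeta_2(u)\bigl(|\tilde\phi(u)|^2-|\phi(u)|^2\bigr)^2,$$ where $$\zeta_1(u)=2^{-1}|\phi(u)|^{-2}\log^{-1}(|\phi(u)|),\qquad \zeta_2(u)=2\max_{\xi\in\{\omega_-(u),\omega_+(u)\}}\Bigl[\frac{1+|\log\xi|}{\xi^2\log^2\xi}\Bigr].$$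
   Context: For truncation levels $0<\omega_-\le\omega_+<1$ and a real-valued function $f$, the truncation operator is $T_{\omega_-,\omega_+}[f](u)=\omega_+$ if $f(u)>\omega_+$, $=f(u)$ if $\omega_-\le f(u)\le\omega_+$, and $=\omega_-$ if $f(u)<\omega_-$ (the levels may depend on $u$). *)

(* Defs.v *)
From HB Require Import structures.
From mathcomp Require Import all_boot all_order all_algebra.
From mathcomp Require Import all_classical all_reals all_analysis.
Set Implicit Arguments. Unset Strict Implicit. Unset Printing Implicit Defensive.
Import Order.TTheory GRing.Theory Num.Theory.
Local Open Scope ring_scope.

Section Defs.
Variable R : realType.

(* Truncation operator T_{w-,w+}[f](u) applied to the value f(u) = x. *)
Definition trunc (wm wp x : R) : R :=
  if wp < x then wp else if x < wm then wm else x.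

Definition charfun_re (P : probability R R) (u : R) : R :=
  Rintegral P setT (fun x => cos (u * x)).
Definition charfun_im (P : probability R R) (u : R) : R :=
  Rintegral P setT (fun x => sin (u * x)).

Definition cmod (a b : R) : R := Num.sqrt (a ^+ 2 + b ^+ 2).

Definition charfun_abs (P : probability R R) (u : R) : R :=
  cmod (charfun_re P u) (charfun_im P u).

Definition calY (phiabs : R) : R := ln (- ln (phiabs ^+ 2)).
Definition calYt (wm wp phitabs : R) : R := ln (- ln (trunc wm wp (phitabs ^+ 2))).

Definition omega_minus_star (phiabs : R) : R :=
  phiabs ^+ 2 * (1 - 2 * `|ln phiabs| / (1 + 2 * `|ln phiabs|)).
Definition omega_plus_star (phiabs : R) : R :=
  phiabs ^+ 2 * (1 + 2 * `|ln phiabs| / (1 + 2 * `|ln phiabs|)).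

Definition zeta1 (phiabs : R) : R := 2^-1 * (phiabs ^+ 2)^-1 * (ln phiabs)^-1.
Definition zeta2_term (xi : R) : R := (1 + `|ln xi|) / (xi ^+ 2 * (ln xi) ^+ 2).
Definition zeta2 (wm wp : R) : R := 2 * Num.max (zeta2_term wm) (zeta2_term wp).
End Defs.

(* Main.v *)
Require Import Defs.
From HB Require Import structures.
From mathcomp Require Import all_boot all_order all_algebra.
From mathcomp Require Import all_classical all_reals all_analysis.
From mathcomp Require Import ring lra.
Import Order.TTheory GRing.Theory Num.Theory.
Set Implicit Arguments. Unset Strict Implicit.
Local Open Scope ring_scope.

Lemma mvt01 (R : realType) (f df : R -> R) (y1 y2 : R) :
  (forall x : R, 0 < x < 1 -> is_derive x 1 f (df x)) ->
  0 < y1 -> y1 <= y2 -> y2 < 1 ->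
  exists2 c, y1 <= c <= y2 & f y2 - f y1 = df c * (y2 - y1).
Proof.
move=> hd y10 y12 y21.
have hin : forall x, y1 <= x <= y2 -> 0 < x < 1.
  move=> x /andP[h1 h2]; apply/andP; split; [exact: lt_le_trans h1| exact: le_lt_trans y21].
have hder : {in `[y1, y2], forall x, derivable f x 1}.
  move=> x xin; rewrite in_itv/= in xin; by case: (hd x (hin x xin)).
have [c cin ->] := MVT_segment y12 (fun x xin => hd x (hin x (subset_itv_oo_cc xin))) 
  (derivable_within_continuous hder).
by exists c => //; move: cin; rewrite in_itv.
Qed.

Lemma g_deriv (R : realType) (y : R) : 0 < y < 1 ->
  is_derive y 1 (fun y => ln (- ln y)) ((y * ln y)^-1).
Proof.
move=> /andP[y0 y1].
have L0 : ln y < 0 by apply: ln_lt0; rewrite y0.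
have h1 : is_derive y 1 (fun y : R => - ln y) (- y^-1).
  by apply: is_deriveN; apply: is_derive1_ln.
have h2 : is_derive (- ln y) 1 (@ln R) ((- ln y)^-1).
  by apply: is_derive1_ln; rewrite oppr_gt0.
have := @is_derive1_comp R (@ln R) (fun y : R => - ln y) y _ _ h2 h1.
move=> H; apply: (is_derive_eq H).
rewrite invrN mulrN mulNr opprK invfM mulrC //.
Qed.

Lemma gp_deriv (R : realType) (y : R) : 0 < y < 1 ->
  is_derive y 1 (fun y : R => (y * ln y)^-1) (- (1 + ln y) / (y * ln y) ^+ 2).
Proof.
move=> /andP[y0 y1].
have L0 : ln y < 0 by apply: ln_lt0; rewrite y0.
have h1 : is_derive y 1 (fun y : R => y * ln y) (1 + ln y).
  have H := is_deriveM (is_derive_id y 1) (is_derive1_ln y0).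
  apply: (is_derive_eq H); rewrite /GRing.scale /= mulr1 mulfV ?gt_eqF// addrC.
have nz : (y * ln y) != 0.
  apply: mulf_neq0; [exact: lt0r_neq0 | exact: ltr0_neq0].
have H := @is_deriveV R (fun y : R => y * ln y) y _ _ nz h1.
apply: (is_derive_eq H).
by rewrite /GRing.scale /= mulrC mulNr mulrN.
Qed.

Lemma ln_le (R : realType) (x y : R) : 0 < x -> x <= y -> ln x <= ln y.
Proof. move=> x0 xy; rewrite ler_ln ?posrE //; exact: lt_le_trans xy. Qed.

Lemma q_deriv (R : realType) (y : R) : 0 < y < 1 ->
  is_derive y 1 (fun y : R => y * ln y) (1 + ln y).
Proof.
move=> /andP[y0 y1].
have H := is_deriveM (is_derive_id y 1) (is_derive1_ln y0).
apply: (is_derive_eq H); rewrite /GRing.scale /= mulr1 mulfV ?gt_eqF// addrC.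
Qed.

Lemma r_deriv (R : realType) (y : R) : 0 < y < 1 ->
  is_derive y 1 (fun y : R => y * (y * ln y)) (y * (1 + 2 * ln y)).
Proof.
move=> hy.
have H := @is_deriveM R R (fun y => y) (fun y : R => y * ln y) y 1 _ _ (is_derive_id y 1) (q_deriv hy).
apply: (is_derive_eq H); rewrite /GRing.scale /=. ring.
Qed.

Lemma q_bound (R : realType) (wm wp y : R) : 0 < wm -> wm <= y -> y <= wp -> wp < 1 ->
  y * ln y <= wm * ln wm \/ y * ln y <= wp * ln wp.
Proof.
move=> w0 wy yw w1.
have y0 : 0 < y by exact: lt_le_trans wy.
have [hl|hl] := lerP (ln y) (-1).
- left.
  have [c /andP[c1 c2] E] := mvt01 (fun x hx => q_deriv hx) w0 wy (le_lt_trans yw w1).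
  have : ln c <= ln y by apply: ln_le => //; exact: lt_le_trans c1.
  move=> hc. rewrite -subr_le0 E. nra.
- right.
  have [c /andP[c1 c2] E] := mvt01 (fun x hx => q_deriv hx) y0 yw w1.
  have : ln y <= ln c by apply: ln_le.
  move=> hc. rewrite -subr_ge0 E. nra.
Qed.

Lemma r_bound (R : realType) (wm wp y : R) : 0 < wm -> wm <= y -> y <= wp -> wp < 1 ->
  y * (y * ln y) <= wm * (wm * ln wm) \/ y * (y * ln y) <= wp * (wp * ln wp).
Proof.
move=> w0 wy yw w1.
have y0 : 0 < y by exact: lt_le_trans wy.
have [hl|hl] := lerP (1 + 2 * ln y) 0.
- left.
  have [c /andP[c1 c2] E] := mvt01 (fun x hx => r_deriv hx) w0 wy (le_lt_trans yw w1).
  have : ln c <= ln y by apply: ln_le => //; exact: lt_le_trans c1.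
  move=> hc. rewrite -subr_le0 E.
  have c0 : 0 < c by exact: lt_le_trans c1.
  have h1 : c * (1 + 2 * ln c) <= 0 by nra.
  nra.
- right.
  have [c /andP[c1 c2] E] := mvt01 (fun x hx => r_deriv hx) y0 yw w1.
  have : ln y <= ln c by apply: ln_le.
  move=> hc. rewrite -subr_ge0 E.
  have c0 : 0 < c by exact: lt_le_trans c1.
  have h1 : 0 <= c * (1 + 2 * ln c) by nra.
  nra.
Qed.

Lemma zt_split (R : realType) (y : R) : 0 < y < 1 ->
  zeta2_term y = ((y * ln y) ^+ 2)^-1 + (- (y * (y * ln y)))^-1.
Proof.
move=> /andP[y0 y1].
have L0 : ln y < 0 by apply: ln_lt0; rewrite y0.
rewrite /zeta2_term ltr0_norm //.
have yn : y != 0 by rewrite gt_eqF.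
have Ln : ln y != 0 by rewrite lt_eqF.
field. by rewrite yn Ln.
Qed.

Lemma A_le (R : realType) (y w : R) : 0 < y < 1 -> 0 < w < 1 ->
  y * ln y <= w * ln w -> ((y * ln y) ^+ 2)^-1 <= zeta2_term w.
Proof.
move=> /andP[y0 y1] hw; have /andP[w0 w1] := hw.
have Ly : ln y < 0 by apply: ln_lt0; rewrite y0.
have Lw : ln w < 0 by apply: ln_lt0; rewrite w0.
move=> h; rewrite zt_split //.
have qw : w * ln w < 0 by nra.
have qy : y * ln y < 0 by nra.
have rw : 0 < (- (w * (w * ln w)))^-1 by rewrite invr_gt0; nra.
apply: le_trans (_ : ((w * ln w) ^+ 2)^-1 <= _); last lra.
rewrite lef_pV2 ?posrE; [nra|nra|nra].
Qed.

Lemma B_le (R : realType) (y w : R) : 0 < y < 1 -> 0 < w < 1 ->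
  y * (y * ln y) <= w * (w * ln w) -> (- (y * (y * ln y)))^-1 <= zeta2_term w.
Proof.
move=> /andP[y0 y1] hw; have /andP[w0 w1] := hw.
have Ly : ln y < 0 by apply: ln_lt0; rewrite y0.
have Lw : ln w < 0 by apply: ln_lt0; rewrite w0.
move=> h; rewrite zt_split //.
have qw : w * ln w < 0 by nra.
have qy : y * ln y < 0 by nra.
have rw : 0 < ((w * ln w) ^+ 2)^-1 by rewrite invr_gt0; nra.
apply: le_trans (_ : (- (w * (w * ln w)))^-1 <= _); last lra.
rewrite lef_pV2 ?posrE; [nra|nra|nra].
Qed.

Lemma zt_bound (R : realType) (wm wp y : R) : 0 < wm -> wm <= y -> y <= wp -> wp < 1 ->
  zeta2_term y <= zeta2 wm wp.
Proof.
move=> w0 wy yw w1.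
have y0 : 0 < y by exact: lt_le_trans wy.
have y1 : y < 1 by exact: le_lt_trans w1.
have wp0 : 0 < wp by exact: lt_le_trans yw.
have wm1 : wm < 1 by exact: le_lt_trans y1.
have hy : 0 < y < 1 by rewrite y0 y1.
have hm : 0 < wm < 1 by rewrite w0 wm1.
have hp : 0 < wp < 1 by rewrite wp0 w1.
rewrite zt_split // /zeta2 mulr2n mulrDl mul1r.
apply: lerD.
- case: (q_bound w0 wy yw w1) => h; rewrite le_max.
  + by rewrite (A_le hy hm h).
  + by rewrite (A_le hy hp h) orbT.
- case: (r_bound w0 wy yw w1) => h; rewrite le_max.
  + by rewrite (B_le hy hm h).
  + by rewrite (B_le hy hp h) orbT.
Qed.

Lemma gpp_bound (R : realType) (wm wp y : R) : 0 < wm -> wm <= y -> y <= wp -> wp < 1 ->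
  `| - (1 + ln y) / (y * ln y) ^+ 2 | <= zeta2 wm wp.
Proof.
move=> w0 wy yw w1.
have y0 : 0 < y by exact: lt_le_trans wy.
have y1 : y < 1 by exact: le_lt_trans w1.
have wp0 : 0 < wp by exact: lt_le_trans yw.
have wm1 : wm < 1 by exact: le_lt_trans y1.
have hy : 0 < y < 1 by rewrite y0 y1.
have hm : 0 < wm < 1 by rewrite w0 wm1.
have hp : 0 < wp < 1 by rewrite wp0 w1.
have Ly : ln y < 0 by apply: ln_lt0.
have e1 : `| - (1 + ln y) / (y * ln y) ^+ 2 | <= zeta2_term y.
  rewrite /zeta2_term normrM.
  rewrite normrN normfV (ger0_norm (sqr_ge0 (y * ln y))) exprMn.
  apply: ler_pM => //; [by rewrite invr_ge0 mulr_ge0 ?sqr_ge0|].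
  by apply: (le_trans (ler_normD _ _)); rewrite normr1.
apply: (le_trans e1); exact: zt_bound.
Qed.

Lemma mvt_sym (R : realType) (f df : R -> R) (lo hi y1 y2 : R) :
  (forall x : R, 0 < x < 1 -> is_derive x 1 f (df x)) ->
  0 < lo -> hi < 1 -> lo <= y1 <= hi -> lo <= y2 <= hi ->
  exists c, [/\ lo <= c <= hi, `|c - y1| <= `|y2 - y1| & f y2 - f y1 = df c * (y2 - y1)].
Proof.
move=> hd l0 h1 /andP[a1 a2] /andP[b1 b2].
have [le12|lt21] := lerP y1 y2.
- have [c /andP[c1 c2] E] := mvt01 hd (lt_le_trans l0 a1) le12 (le_lt_trans b2 h1).
  exists c; split => //.
  + by rewrite (le_trans a1 c1) (le_trans c2 b2).
  + by rewrite !ger0_norm ?subr_ge0 //; lra.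
- have [c /andP[c1 c2] E] := mvt01 hd (lt_le_trans l0 b1) (ltW lt21) (le_lt_trans a2 h1).
  exists c; split.
  + by rewrite (le_trans b1 c1) (le_trans c2 a2).
  + by rewrite !ler0_norm ?subr_le0 //; try lra.
  + have -> : f y2 - f y1 = - (f y1 - f y2) by ring.
    rewrite E; ring.
Qed.

Lemma aux (R : realType) (G Z u v : R) : `|G| <= Z -> `|u| <= `|v| ->
  `|G * u * v| <= Z * v ^+ 2.
Proof.
move=> hG huv; rewrite !normrM -[v ^+ 2]real_normK ?num_real // expr2 mulrA.
apply: ler_wpM2r => //; apply: ler_pM => //.
Qed.

Definition gg (R : realType) (y : R) : R := ln (- ln y).
Definition gp (R : realType) (y : R) : R := (y * ln y)^-1.

Lemma taylor (R : realType) (wm wp a t : R) : 0 < wm -> wp < 1 ->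
  wm <= a <= wp -> wm <= t <= wp ->
  `| gg t - gg a - gp a * (t - a) | <= zeta2 wm wp * (t - a) ^+ 2.
Proof.
move=> w0 w1 ha ht.
have [xi [hxi dxi E1]] := mvt_sym (fun x hx => g_deriv hx) w0 w1 ha ht.
have [eta [heta _ E2]] := mvt_sym (fun x hx => gp_deriv hx) w0 w1 ha hxi.
rewrite /gg /gp.
have -> : ln (- ln t) - ln (- ln a) - (a * ln a)^-1 * (t - a)
   = ((xi * ln xi)^-1 - (a * ln a)^-1) * (t - a) by rewrite E1; ring.
rewrite E2.
have /andP[e1 e2] := heta.
apply: aux => //; exact: gpp_bound w0 e1 e2 w1.
Qed.

Lemma key (R : realType) (a wm wp x : R) : 0 < a -> a < 1 -> 0 < wm ->
  wm <= a * (1 - (- ln a) / (1 - ln a)) ->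
  a * (1 + (- ln a) / (1 - ln a)) <= wp -> wp < 1 ->
  `| gg (trunc wm wp x) - gg a - gp a * (x - a) | <= zeta2 wm wp * (x - a) ^+ 2.
Proof.
move=> a0 a1 w0 hwm hwp w1.
have L0 : ln a < 0 by apply: ln_lt0; rewrite a0.
set c := (- ln a) / (1 - ln a) in hwm hwp.
have c0 : 0 < c by rewrite /c divr_gt0 //; lra.
have ac0 : 0 < a * c by rewrite mulr_gt0.
have hwma : wm <= a by lra.
have hwpa : a <= wp by lra.
have ha : wm <= a <= wp by rewrite hwma hwpa.
set Z := zeta2 wm wp.
have hZa : zeta2_term a <= Z by apply: zt_bound.
have Z0 : 0 <= Z by apply: le_trans hZa; rewrite /zeta2_term divr_ge0 // ?addr_ge0 // mulr_ge0 ?sqr_ge0.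
set k := - gp a.
have kE : k = zeta2_term a * (a * c).
  rewrite /k /gp /zeta2_term /c ltr0_norm //.
  have an : a != 0 by rewrite gt_eqF.
  have Ln : ln a != 0 by rewrite lt_eqF.
  have L1 : 1 - ln a != 0 by rewrite gt_eqF //; lra.
  field. by rewrite an Ln L1.
have k0 : 0 < k by rewrite /k /gp -invrN invr_gt0; nra.
have kZ : k <= Z * (a * c) by rewrite kE ler_wpM2r // ltW.
rewrite /trunc.
have [hx|hx] := ltrP wp x.
- have hh : wm <= wp <= wp by rewrite (le_trans hwma hwpa) lexx.
  have T := taylor w0 w1 ha hh; rewrite -/Z in T.
  have -> : gg wp - gg a - gp a * (x - a) = (gg wp - gg a - gp a * (wp - a)) + k * (x - wp).
    by rewrite /k; ring.
  apply: (le_trans (ler_normD _ _)).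
  rewrite (ger0_norm (x := k * (x - wp))); last first.
    apply: mulr_ge0; [exact: ltW | lra].
  apply: (le_trans (lerD T (lexx _))).
  have hd : a * c <= wp - a by lra.
  have : k * (x - wp) <= Z * (a * c) * (x - wp) by apply: ler_wpM2r => //; lra.
  have : Z * (a * c) * (x - wp) <= Z * (wp - a) * (x - wp).
    rewrite -subr_ge0.
    have -> : Z * (wp - a) * (x - wp) - Z * (a * c) * (x - wp) = Z * ((wp - a) - a * c) * (x - wp) by ring.
    apply: mulr_ge0; [apply: mulr_ge0 => //|]; lra.
  have : 0 <= Z * (wp - a) * (x - wp) by apply: mulr_ge0; [apply: mulr_ge0 => //|]; lra.
  have : 0 <= Z * (x - wp) ^+ 2 by rewrite mulr_ge0 ?sqr_ge0.
  move=> h1 h2 h3 h4.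
  have -> : Z * (x - a) ^+ 2 = Z * (wp - a) ^+ 2 + 2 * (Z * (wp - a) * (x - wp)) + Z * (x - wp) ^+ 2 by ring.
  lra.
- have [hx'|hx'] := ltrP x wm.
  + have hh : wm <= wm <= wp by rewrite (le_trans hwma hwpa) lexx.
    have T := taylor w0 w1 ha hh; rewrite -/Z in T.
    have -> : gg wm - gg a - gp a * (x - a) = (gg wm - gg a - gp a * (wm - a)) - k * (wm - x).
      by rewrite /k; ring.
    apply: (le_trans (ler_normB _ _)).
    rewrite (ger0_norm (x := k * (wm - x))); last first.
      apply: mulr_ge0; [exact: ltW | lra].
    apply: (le_trans (lerD T (lexx _))).
    have hd : a * c <= a - wm by lra.
    have : k * (wm - x) <= Z * (a * c) * (wm - x) by apply: ler_wpM2r => //; lra.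
    have : Z * (a * c) * (wm - x) <= Z * (a - wm) * (wm - x).
      rewrite -subr_ge0.
      have -> : Z * (a - wm) * (wm - x) - Z * (a * c) * (wm - x) = Z * ((a - wm) - a * c) * (wm - x) by ring.
      apply: mulr_ge0; [apply: mulr_ge0 => //|]; lra.
    have : 0 <= Z * (a - wm) * (wm - x) by apply: mulr_ge0; [apply: mulr_ge0 => //|]; lra.
    have : 0 <= Z * (wm - x) ^+ 2 by rewrite mulr_ge0 ?sqr_ge0.
    move=> h1 h2 h3 h4.
    have -> : Z * (x - a) ^+ 2 = Z * (wm - a) ^+ 2 + 2 * (Z * (a - wm) * (wm - x)) + Z * (wm - x) ^+ 2 by ring.
    lra.
  + by apply: taylor => //; rewrite hx hx'.
Qed.

Lemma main2 (R : realType) (s pt wm wp : R) : 0 < s -> s < 1 -> 0 < wm ->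
  wm <= omega_minus_star s -> omega_plus_star s <= wp -> wp < 1 ->
  `| calYt wm wp pt - calY s - zeta1 s * (pt ^+ 2 - s ^+ 2) |
    <= zeta2 wm wp * (pt ^+ 2 - s ^+ 2) ^+ 2.
Proof.
move=> s0 s1 w0 hwm hwp w1.
have L0 : ln s < 0 by apply: ln_lt0; rewrite s0.
have La : ln (s ^+ 2) = 2 * ln s by rewrite lnXn // mulr2n mulrDl mul1r.
have a0 : 0 < s ^+ 2 by rewrite exprn_gt0.
have a1 : s ^+ 2 < 1 by rewrite expr2; nra.
have sn : s != 0 by rewrite gt_eqF.
have Ln : ln s != 0 by rewrite lt_eqF.
have D1 : 1 - 2 * ln s != 0 by rewrite gt_eqF //; lra.
have Em : omega_minus_star s = s ^+ 2 * (1 - (- ln (s ^+ 2)) / (1 - ln (s ^+ 2))).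
  rewrite /omega_minus_star La ltr0_norm //.
  have -> : 1 + 2 * - ln s = 1 - 2 * ln s by ring.
  congr (_ * (1 - _)); ring.
have Ep : omega_plus_star s = s ^+ 2 * (1 + (- ln (s ^+ 2)) / (1 - ln (s ^+ 2))).
  rewrite /omega_plus_star La ltr0_norm //.
  have -> : 1 + 2 * - ln s = 1 - 2 * ln s by ring.
  congr (_ * (1 + _)); ring.
have Ez : zeta1 s = gp (s ^+ 2).
  rewrite /zeta1 /gp La. field. by rewrite sn Ln.
rewrite Em in hwm; rewrite Ep in hwp.
have K := key (pt ^+ 2) a0 a1 w0 hwm hwp w1.
rewrite Ez; exact: K.
Qed.

Unset Implicit Arguments. Set Strict Implicit.

Theorem lemma6p1 (R : realType) (P : probability R R) (u : R)
    (phit_re phit_im : R) (wm wp : R) :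
  u != 0 ->
  0 < charfun_abs P u -> charfun_abs P u < 1 ->
  0 < wm -> wm <= omega_minus_star (charfun_abs P u) ->
  omega_minus_star (charfun_abs P u) <= omega_plus_star (charfun_abs P u) ->
  omega_plus_star (charfun_abs P u) <= wp -> wp < 1 ->
  let phiabs := charfun_abs P u in
  let phitabs := cmod phit_re phit_im in
  `| calYt wm wp phitabs - calY phiabs
       - zeta1 phiabs * (phitabs ^+ 2 - phiabs ^+ 2) |
    <= zeta2 wm wp * (phitabs ^+ 2 - phiabs ^+ 2) ^+ 2.
Proof.
move=> _ s0 s1 w0 hwm _ hwp w1.
rewrite [X in is_true X]/=.
exact: main2.
Qed.
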